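(* Let $c>0$, $\omega,\omega^\perp\in S^1$ with $\omega\cdot\omega^\perp=0$, $\omega(c)=\frac{1}{\sqrt{c^2+1}}\binom{c\omega}{-1}\in\mathbb{R}^3$, and $\vartheta=\binom{c(\omega+i\omega^\perp)}{-1}\in\mathbb{C}^3$. Let $p\in\mathbb{R}^3$, $\delta>0$, and $y_1,y_2,y_3\in\mathbb{R}^3$ with $y_j\cdot\omega(c)=p\cdot\omega(c)-\delta$, affinely independent together with $p$. Let $D$ be the interior of the tetrahedron with vertices $p,y_1,y_2,y_3$ and $Q$ the interior of the triangle with vertices $y_1,y_2,y_3$. With $\Delta=\{(\alpha,\beta):\alpha,\beta\ge0,\alpha+\beta\le1\}$, let $\Delta_1,\Delta_2,\Delta_3$ be the images of $\Delta$ under $(\alpha,\beta)\mapsto p+\alpha(y_1-p)+\beta(y_2-p)$, $p+\alpha(y_2-p)+\beta(y_3-p)$, $p+\alpha(y_3-p)+\beta(y_1-p)$ respectively, so that $\partial D=Q\cup\Delta_1\cup\Delta_2\cup\Delta_3$, and let $\nu_j$ be the outward unit normal of $D$ on $\Delta_j$; indices are taken modulo $3$ ($\nu_0=\nu_3$, $\nu_4=\nu_1$). Assume the labeling is such that $$(\nu_1\times\nu_3)\cdot\omega(c)<0,\quad(\nu_2\times\nu_1)\cdot\omega(c)<0,\quad(\nu_3\times\nu_2)\cdot\omega(c)<0.$$ Let $$K_D=2\delta\int_Q\frac{dS(y)}{\Big(\frac{\delta\sqrt{c^2+1}}{c}-i(y-p)\cdot\binom{\omega^\perp}{0}\Big)^{3}}.$$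 Then $$K_D\,\vartheta=c^3\sum_{j=1}^3\frac{|(\nu_j\times\nu_{j-1})\times(\nu_{j+1}\times\nu_j)|}{\big((\nu_j\times\nu_{j-1})\cdot\vartheta\big)\big((\nu_{j+1}\times\nu_j)\cdot\vartheta\big)}\,\nu_j.$$
   Context: $\times$ is the cross product in $\mathbb{R}^3$ and $\cdot$ on complex vectors is the bilinear (non-Hermitian) product. *)

(* Defs.v *)
From Stdlib Require Import Reals.
From Coquelicot Require Import Coquelicot.
Open Scope R_scope.

Definition R3 := (R * R * R)%type.
Definition C3 := (C * C * C)%type.

Definition v3 (a b c : R) : R3 := (a, b, c).
Definition vx (v : R3) : R := fst (fst v).
Definition vy (v : R3) : R := snd (fst v).
Definition vz (v : R3) : R := snd v.

Definition vadd (u v : R3) : R3 := v3 (vx u + vx v) (vy u + vy v) (vz u + vz v).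
Definition vsub (u v : R3) : R3 := v3 (vx u - vx v) (vy u - vy v) (vz u - vz v).
Definition vscal (k : R) (v : R3) : R3 := v3 (k * vx v) (k * vy v) (k * vz v).
Definition dot (u v : R3) : R := vx u * vx v + vy u * vy v + vz u * vz v.
Definition cross (u v : R3) : R3 :=
  v3 (vy u * vz v - vz u * vy v) (vz u * vx v - vx u * vz v) (vx u * vy v - vy u * vx v).
Definition vnorm (v : R3) : R := sqrt (dot v v).
Definition det3 (u v w : R3) : R := dot u (cross v w).

Definition cv3 (a b c : C) : C3 := (a, b, c).
Definition cvx (v : C3) : C := fst (fst v).
Definition cvy (v : C3) : C := snd (fst v).
Definition cvz (v : C3) : C := snd v.
(* bilinear (non-Hermitian) product of a real vector with a complex vector *)
Definition rcdot (u : R3) (z : C3) : C :=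
  (RtoC (vx u) * cvx z + RtoC (vy u) * cvy z + RtoC (vz u) * cvz z)%C.
Definition cscal (k : C) (z : C3) : C3 := cv3 (k * cvx z)%C (k * cvy z)%C (k * cvz z)%C.
Definition cvadd (u v : C3) : C3 := cv3 (cvx u + cvx v)%C (cvy u + cvy v)%C (cvz u + cvz v)%C.
Definition cvofR (v : R3) : C3 := cv3 (RtoC (vx v)) (RtoC (vy v)) (RtoC (vz v)).

(* Surface integral of a (continuous) complex function over the triangle with
   vertices y1 y2 y3, via the affine parametrization
   (a,b) |-> y1 + a (y2 - y1) + b (y3 - y1), (a,b) in the standard simplex,
   with surface element |(y2-y1) x (y3-y1)| da db, as an iterated Riemann integral. *)
Definition tri_param (y1 y2 y3 : R3) (a b : R) : R3 :=
  vadd y1 (vadd (vscal a (vsub y2 y1)) (vscal b (vsub y3 y1))).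
Definition triangle_surface_integral (f : R3 -> C) (y1 y2 y3 : R3) : C :=
  (RtoC (vnorm (cross (vsub y2 y1) (vsub y3 y1))) *
   @RInt C_R_CompleteNormedModule
     (fun a => @RInt C_R_CompleteNormedModule
                 (fun b => f (tri_param y1 y2 y3 a b)) 0 (1 - a)) 0 1)%C.

(* nu is the outward unit normal of the tetrahedron on the planar face with
   vertices p, a, b, whose opposite vertex is opp. *)
Definition outward_unit_normal (p a b opp nu : R3) : Prop :=
  vnorm nu = 1 /\ dot nu (vsub a p) = 0 /\ dot nu (vsub b p) = 0 /\
  dot nu (vsub opp p) < 0.

Definition omega_c (c w1 w2 : R) : R3 :=
  vscal (/ sqrt (c ^ 2 + 1)) (v3 (c * w1) (c * w2) (-1)).
Definition theta (c w1 w2 wp1 wp2 : R) : C3 :=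
  cv3 (RtoC c * (RtoC w1 + Ci * RtoC wp1))%C (RtoC c * (RtoC w2 + Ci * RtoC wp2))%C (RtoC (-1)).

(* the term of the sum for face j, with A = nu_j x nu_{j-1}, B = nu_{j+1} x nu_j *)
Definition sum_term (th : C3) (nprev nj nnext : R3) : C3 :=
  let A := cross nj nprev in
  let B := cross nnext nj in
  cscal (RtoC (vnorm (cross A B)) / (rcdot A th * rcdot B th))%C (cvofR nj).

(* Main.v *)
Require Import Defs.
From Stdlib Require Import Reals Lra.
From Coquelicot Require Import Coquelicot.
Open Scope R_scope.

Lemma cd_pair (u v : R -> R) x du dv :
  is_derive u x du -> is_derive v x dv ->
  @is_derive R_AbsRing C_R_NormedModule (fun t => (u t, v t) : C) x ((du, dv) : C).
Proof.
  intros Hu Hv. unfold is_derive in *.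
  refine (filterdiff_comp_2 u v (fun a b => (a, b)) _ _ (fun a b => (a, b)) Hu Hv _).
  apply filterdiff_linear.
  apply (is_linear_prod (fun t : R * R => fst t) (fun t : R*R => snd t)).
  apply is_linear_fst. apply is_linear_snd.
Qed.

Lemma cd_fst (f : R -> C) x l :
  @is_derive R_AbsRing C_R_NormedModule f x l -> is_derive (fun t => fst (f t)) x (fst l).
Proof.
  intros H. unfold is_derive in *.
  refine (filterdiff_comp' f (fun t : C => fst t) x _ (fun t : C => fst t) H _).
  apply filterdiff_linear. apply (@is_linear_fst R_AbsRing R_NormedModule R_NormedModule).
Qed.

Lemma cd_snd (f : R -> C) x l :
  @is_derive R_AbsRing C_R_NormedModule f x l -> is_derive (fun t => snd (f t)) x (snd l).
Proof.
  intros H. unfold is_derive in *.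
  refine (filterdiff_comp' f (fun t : C => snd t) x _ (fun t : C => snd t) H _).
  apply filterdiff_linear. apply (@is_linear_snd R_AbsRing R_NormedModule R_NormedModule).
Qed.

Notation CD f x l := (@is_derive R_AbsRing C_R_NormedModule f x l).

Lemma isd_eq {K : AbsRing} {V : NormedModule K} (f : K -> V) x l l' :
  is_derive f x l -> l = l' -> is_derive f x l'.
Proof. intros H ->; exact H. Qed.

Lemma rd_mult (f g : R -> R) x df dg : is_derive f x df -> is_derive g x dg ->
  is_derive (fun t => f t * g t) x (df * g x + f x * dg).
Proof. intros H1 H2. exact (is_derive_mult f g x df dg H1 H2 Rmult_comm). Qed.
Lemma rd_minus (f g : R -> R) x df dg : is_derive f x df -> is_derive g x dg ->
  is_derive (fun t => f t - g t) x (df - dg).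
Proof. intros H1 H2. exact (is_derive_minus f g x df dg H1 H2). Qed.
Lemma rd_plus (f g : R -> R) x df dg : is_derive f x df -> is_derive g x dg ->
  is_derive (fun t => f t + g t) x (df + dg).
Proof. intros H1 H2. exact (is_derive_plus f g x df dg H1 H2). Qed.
Lemma rd_opp (f : R -> R) x df : is_derive f x df ->
  is_derive (fun t => - f t) x (- df).
Proof. intros H1. exact (is_derive_opp f x df H1). Qed.

Ltac rfix := match goal with |- ?a = ?b => change (@eq R a b) end; simpl; ring.

Lemma cd_split (f : R -> C) x l :
  is_derive (fun t => fst (f t)) x (fst l) -> is_derive (fun t => snd (f t)) x (snd l) ->
  CD f x l.
Proof.
  intros H1 H2. destruct l as [l1 l2].
  apply (is_derive_ext (fun t => (fst (f t), snd (f t)) : C)).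
  - intros t; destruct (f t); reflexivity.
  - apply cd_pair; assumption.
Qed.

Lemma cd_const (k : C) x : CD (fun _ => k) x (RtoC 0).
Proof. exact (@is_derive_const R_AbsRing C_R_NormedModule k x). Qed.

Lemma cd_RtoC (u : R -> R) x du : is_derive u x du -> CD (fun t => RtoC (u t)) x (RtoC du).
Proof. intros H. apply cd_pair. exact H. exact (@is_derive_const R_AbsRing R_NormedModule 0 x). Qed.

Lemma cd_plus (f g : R -> C) x df dg : CD f x df -> CD g x dg ->
  CD (fun t => f t + g t)%C x (df + dg)%C.
Proof. intros H1 H2. exact (is_derive_plus f g x df dg H1 H2). Qed.

Lemma cd_opp (f : R -> C) x df : CD f x df -> CD (fun t => - f t)%C x (- df)%C.
Proof. intros H1. exact (is_derive_opp f x df H1). Qed.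

Lemma cd_minus (f g : R -> C) x df dg : CD f x df -> CD g x dg ->
  CD (fun t => f t - g t)%C x (df - dg)%C.
Proof. intros H1 H2. apply cd_plus; auto. apply cd_opp; auto. Qed.

Lemma cd_mult (f g : R -> C) x df dg : CD f x df -> CD g x dg ->
  CD (fun t => f t * g t)%C x (df * g x + f x * dg)%C.
Proof.
  intros H1 H2.
  pose proof (cd_fst _ _ _ H1) as F1. pose proof (cd_snd _ _ _ H1) as F2.
  pose proof (cd_fst _ _ _ H2) as G1. pose proof (cd_snd _ _ _ H2) as G2.
  apply cd_split; simpl.
  - eapply isd_eq. apply rd_minus; apply rd_mult; eassumption. rfix.
  - eapply isd_eq. apply rd_plus; apply rd_mult; eassumption. rfix.
Qed.

Lemma cd_inv (f : R -> C) x df : CD f x df -> f x <> RtoC 0 ->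
  CD (fun t => / f t)%C x (- df / (f x * f x))%C.
Proof.
  intros H1 Hnz.
  pose proof (cd_fst _ _ _ H1) as F1. pose proof (cd_snd _ _ _ H1) as F2.
  assert (HN : fst (f x) ^ 2 + snd (f x) ^ 2 <> 0).
  { intro E. apply Hnz. destruct (f x) as [a b]; simpl in *.
    assert (a = 0) by nra. assert (b = 0) by nra. subst; reflexivity. }
  assert (DN : is_derive (fun t => fst (f t) ^ 2 + snd (f t) ^ 2) x
                 (2 * fst (f x) * fst df + 2 * snd (f x) * snd df)).
  { eapply isd_eq. apply rd_plus; apply is_derive_pow; eassumption.
    simpl. ring. }
  apply cd_split; simpl.
  - eapply isd_eq. apply rd_mult. exact F1. apply is_derive_inv. exact DN. exact HN.
    simpl. destruct (f x) as [a b]; destruct df as [d e]; simpl in *.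
    field. split; [|lra]. replace ((a * a - b * b) * (a * a - b * b) + (a * b + b * a) * (a * b + b * a)) with ((a*a+b*b)*(a*a+b*b)) by ring. apply Rmult_integral_contrapositive; split; lra.
  - eapply isd_eq. apply rd_mult. apply rd_opp. exact F2. apply is_derive_inv. exact DN. exact HN.
    simpl. destruct (f x) as [a b]; destruct df as [d e]; simpl in *.
    field. split; [|lra]. replace ((a * a - b * b) * (a * a - b * b) + (a * b + b * a) * (a * b + b * a)) with ((a*a+b*b)*(a*a+b*b)) by ring. apply Rmult_integral_contrapositive; split; lra.
Qed.

Lemma fst_nz (w : C) : fst w <> 0 -> w <> RtoC 0.
Proof. intros H E. apply H. rewrite E. reflexivity. Qed.

Lemma cd_id x : CD (fun t => RtoC t) x (RtoC 1).
Proof. apply (cd_RtoC (fun t => t)). exact (@is_derive_id R_AbsRing x). Qed.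

Lemma cd_lin (Z b : C) x : CD (fun t => Z - b * RtoC t)%C x (- b)%C.
Proof.
  eapply isd_eq. apply cd_minus. apply cd_const. apply cd_mult. apply cd_const. apply cd_id.
  apply injective_projections; simpl; ring.
Qed.

Lemma cd_pow_ex (f : R -> C) x df n : CD f x df -> exists l, CD (fun t => f t ^ n)%C x l.
Proof.
  intros H. induction n as [|n [l IH]].
  - eexists. apply (cd_const (RtoC 1)).
  - eexists. simpl. apply cd_mult. exact H. exact IH.
Qed.

Lemma cd_cpl (f : R -> C) x l : CD f x l ->
  @is_derive R_AbsRing (CompleteNormedModule.NormedModule _ C_R_CompleteNormedModule) f x l.
Proof. intros H; exact H. Qed.

Lemma isr_eq (f : R -> C) a b l l' : is_RInt (V := C_R_CompleteNormedModule) f a b l -> l = l' ->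
  is_RInt (V := C_R_CompleteNormedModule) f a b l'.
Proof. intros H ->; exact H. Qed.

Lemma inner (Z be : C) (T : R) : fst Z <> 0 -> fst be = 0 ->
  is_RInt (V := C_R_CompleteNormedModule) (fun b => / (Z - be * RtoC b) ^ 3)%C 0 T
    (RtoC T * (2 * Z - be * RtoC T) * / (2 * (Z * Z)) * / ((Z - be * RtoC T) * (Z - be * RtoC T)))%C.
Proof.
  intros HZ Hb.
  assert (HW : forall t, (Z - be * RtoC t)%C <> RtoC 0).
  { intros t. apply fst_nz. simpl. rewrite Hb. lra. }
  assert (HZ' : Z <> RtoC 0) by (apply fst_nz; auto).
  set (H := fun t : R => (RtoC t * (2 * Z - be * RtoC t) * / (2 * (Z * Z)) * / ((Z - be * RtoC t) * (Z - be * RtoC t)))%C).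
  eapply isr_eq. apply (@is_RInt_derive C_R_CompleteNormedModule H).
  - intros x _. apply cd_cpl. unfold H. eapply isd_eq.
    apply cd_mult. apply cd_mult. apply cd_mult. apply cd_id.
    apply cd_minus. apply cd_const. apply cd_mult. apply cd_const. apply cd_id.
    apply cd_const. apply cd_inv. apply cd_mult; apply cd_lin. apply Cmult_neq_0; apply HW.
    simpl. field. split; [apply HW | exact HZ'].
  - intros x _. apply (@ex_derive_continuous R_AbsRing C_R_NormedModule).
    destruct (cd_pow_ex _ x _ 3 (cd_lin Z be x)) as [l Hl]. eexists.
    apply cd_inv. exact Hl. apply Cpow_nz. apply HW.
  - assert (E : H 0 = RtoC 0) by (unfold H; rewrite !Cmult_0_l; reflexivity).
    rewrite E. apply (@minus_zero_r _ (H T)).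
Qed.

Lemma cd_1m x : CD (fun t => RtoC (1 - t)) x (RtoC (-1)).
Proof. apply cd_RtoC. auto_derive. auto. ring. Qed.

Lemma cd_aff (z u : C) x : CD (fun t => z + RtoC t * u)%C x (RtoC 1 * u)%C.
Proof. eapply isd_eq. apply cd_plus. apply cd_const. apply cd_mult. apply cd_id. apply cd_const.
  apply injective_projections; simpl; ring. Qed.


Definition za (z1 z2 : C) (a : R) : C := (z1 + RtoC a * (z2 - z1))%C.
Definition wa (z2 z3 : C) (a : R) : C := (z3 + RtoC a * (z2 - z3))%C.
Definition Vf (z1 z2 z3 : C) (a : R) : C :=
  (RtoC (1 - a) * (2 * za z1 z2 a - (z1 - z3) * RtoC (1 - a)) * / (2 * (za z1 z2 a * za z1 z2 a)) *
   / ((za z1 z2 a - (z1 - z3) * RtoC (1 - a)) * (za z1 z2 a - (z1 - z3) * RtoC (1 - a))))%C.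
Definition Ff (z1 z2 z3 : C) (a : R) : C :=
  (RtoC a * ((z1 + z3) + (z2 - z1 - z3) * RtoC a) * / (2 * z1 * z3) * / (za z1 z2 a * wa z2 z3 a))%C.

Lemma za_nz (K : R) (z1 z2 z3 : C) (HK : K <> 0) (H1 : fst z1 = K) (H2 : fst z2 = K) (H3 : fst z3 = K) (a : R) : za z1 z2 a <> RtoC 0.
Proof. apply fst_nz. unfold za; simpl. rewrite H1, H2. intro E; apply HK; rewrite <- E; ring. Qed.
Lemma wa_nz (K : R) (z1 z2 z3 : C) (HK : K <> 0) (H1 : fst z1 = K) (H2 : fst z2 = K) (H3 : fst z3 = K) (a : R) : wa z2 z3 a <> RtoC 0.
Proof. apply fst_nz. unfold wa; simpl. rewrite H3, H2. intro E; apply HK; rewrite <- E; ring. Qed.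
Lemma W_nz (K : R) (z1 z2 z3 : C) (HK : K <> 0) (H1 : fst z1 = K) (H2 : fst z2 = K) (H3 : fst z3 = K) (a : R) : (za z1 z2 a - (z1 - z3) * RtoC (1 - a))%C <> RtoC 0.
Proof. apply fst_nz. unfold za; simpl. rewrite H1, H2, H3. intro E; apply HK; rewrite <- E; ring. Qed.
Lemma z1_nz (K : R) (z1 z2 z3 : C) (HK : K <> 0) (H1 : fst z1 = K) (H2 : fst z2 = K) (H3 : fst z3 = K) : z1 <> RtoC 0. Proof. apply fst_nz. rewrite H1; auto. Qed.
Lemma z2_nz (K : R) (z1 z2 z3 : C) (HK : K <> 0) (H1 : fst z1 = K) (H2 : fst z2 = K) (H3 : fst z3 = K) : z2 <> RtoC 0. Proof. apply fst_nz. rewrite H2; auto. Qed.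
Lemma z3_nz (K : R) (z1 z2 z3 : C) (HK : K <> 0) (H1 : fst z1 = K) (H2 : fst z2 = K) (H3 : fst z3 = K) : z3 <> RtoC 0. Proof. apply fst_nz. rewrite H3; auto. Qed.

Lemma outer (K : R) (z1 z2 z3 : C) (HK : K <> 0) (H1 : fst z1 = K) (H2 : fst z2 = K) (H3 : fst z3 = K) : is_RInt (V := C_R_CompleteNormedModule) (Vf z1 z2 z3) 0 1 (/ (2 * z1 * z2 * z3))%C.
Proof.
  eapply isr_eq. apply (@is_RInt_derive C_R_CompleteNormedModule (Ff z1 z2 z3)).
  - intros x _. apply cd_cpl. unfold Ff. eapply isd_eq.
    apply cd_mult. apply cd_mult. apply cd_mult. apply cd_id.
    apply cd_plus. apply cd_const. apply cd_mult. apply cd_const. apply cd_id.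
    apply cd_const. apply cd_inv. apply cd_mult; apply cd_aff. apply Cmult_neq_0; [apply (za_nz K z1 z2 z3 HK H1 H2 H3)|apply (wa_nz K z1 z2 z3 HK H1 H2 H3)].
    unfold Vf. pose proof (za_nz K z1 z2 z3 HK H1 H2 H3 x). pose proof (wa_nz K z1 z2 z3 HK H1 H2 H3 x). pose proof (W_nz K z1 z2 z3 HK H1 H2 H3 x).
    pose proof (z1_nz K z1 z2 z3 HK H1 H2 H3). pose proof (z3_nz K z1 z2 z3 HK H1 H2 H3).
    unfold za, wa in *. rewrite RtoC_minus in *. match goal with |- ?a = ?b => change (@eq C a b) end. field. repeat split; auto.
  - intros x _. apply (@ex_derive_continuous R_AbsRing C_R_NormedModule). unfold Vf.
    eexists. apply cd_mult. apply cd_mult. apply cd_mult. apply cd_1m.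
    apply cd_minus. apply cd_mult. apply cd_const. apply cd_aff. apply cd_mult. apply cd_const. apply cd_1m.
    apply cd_inv. apply cd_mult. apply cd_const. apply cd_mult; apply cd_aff.
    apply Cmult_neq_0. apply fst_nz; simpl; lra. apply Cmult_neq_0; apply (za_nz K z1 z2 z3 HK H1 H2 H3).
    apply cd_inv. apply cd_mult; (apply cd_minus; [apply cd_aff | apply cd_mult; [apply cd_const | apply cd_1m]]).
    apply Cmult_neq_0; apply (W_nz K z1 z2 z3 HK H1 H2 H3).
  - assert (E : Ff z1 z2 z3 0 = RtoC 0) by (unfold Ff; rewrite !Cmult_0_l; reflexivity).
    rewrite E. transitivity (Ff z1 z2 z3 1). apply (@minus_zero_r _ (Ff z1 z2 z3 1)).
    unfold Ff, za, wa. pose proof (z1_nz K z1 z2 z3 HK H1 H2 H3). pose proof (z2_nz K z1 z2 z3 HK H1 H2 H3). pose proof (z3_nz K z1 z2 z3 HK H1 H2 H3).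
    match goal with |- ?a = ?b => change (@eq C a b) end.
    replace (z1 + RtoC 1 * (z2 - z1))%C with z2 by ring.
    replace (z3 + RtoC 1 * (z2 - z3))%C with z2 by ring.
    field. repeat split; auto.
Qed.

Lemma tri_integral (K L1 L2 L3 : R) (g : R -> R -> C) : K <> 0 ->
  (forall a b, g a b = / (RtoC K - Ci * RtoC (L1 + a * (L2 - L1) + b * (L3 - L1))) ^ 3)%C ->
  @RInt C_R_CompleteNormedModule (fun a => @RInt C_R_CompleteNormedModule (fun b => g a b) 0 (1 - a)) 0 1
  = (/ (2 * (RtoC K - Ci * RtoC L1) * (RtoC K - Ci * RtoC L2) * (RtoC K - Ci * RtoC L3)))%C.
Proof.
  intros HK Hg.
  set (z1 := (RtoC K - Ci * RtoC L1)%C). set (z2 := (RtoC K - Ci * RtoC L2)%C).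
  set (z3 := (RtoC K - Ci * RtoC L3)%C).
  assert (E1 : fst z1 = K) by (unfold z1; simpl; ring).
  assert (E2 : fst z2 = K) by (unfold z2; simpl; ring).
  assert (E3 : fst z3 = K) by (unfold z3; simpl; ring).
  rewrite (@RInt_ext C_R_CompleteNormedModule _ (Vf z1 z2 z3)).
  - apply is_RInt_unique. apply (outer K); auto.
  - intros a _. apply is_RInt_unique.
    eapply is_RInt_ext. 2: apply (inner (za z1 z2 a) (z1 - z3)%C (1 - a)).
    + intros b _. rewrite Hg. f_equal. f_equal. unfold za, z1, z2, z3.
      rewrite !RtoC_plus, !RtoC_mult, !RtoC_minus. ring.
    + unfold za, z1, z2. simpl. intro E; apply HK; rewrite <- E; ring.
    + unfold z1, z3; simpl; ring.
Qed.

Ltac vunf := unfold det3, dot, cross, vscal, vsub, vadd, v3, vx, vy, vz in *; simpl in *.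

Lemma v3_ext (a b : R3) : vx a = vx b -> vy a = vy b -> vz a = vz b -> a = b.
Proof. destruct a as [[a1 a2] a3], b as [[b1 b2] b3]; unfold vx, vy, vz; simpl; intros; subst; auto. Qed.

Lemma dot_ge0 (a : R3) : 0 <= dot a a.
Proof. vunf. nra. Qed.

Lemma unit_dot (a : R3) : vnorm a = 1 -> dot a a = 1.
Proof. unfold vnorm. intros H. rewrite <- (sqrt_sqrt (dot a a)) by apply dot_ge0. rewrite H; ring. Qed.

Lemma dot_nz (a b : R3) : dot a b <> 0 -> dot a a <> 0.
Proof.
  intros H H0. apply H. unfold dot in *.
  assert (vx a = 0) by nra. assert (vy a = 0) by nra. assert (vz a = 0) by nra.
  rewrite H1, H2, H3; ring.
Qed.

Lemma solve_aux (x y k d : R) : d <> 0 -> x * d - y * k = 0 -> x = k / d * y.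
Proof. intros Hd H. assert (x*d = y*k) by lra. replace x with (x*d/d) by (field;auto). rewrite H0. field. auto. Qed.

Lemma normal_par (nu a b : R3) : dot nu a = 0 -> dot nu b = 0 -> dot (cross a b) (cross a b) <> 0 ->
  nu = vscal (dot nu (cross a b) / dot (cross a b) (cross a b)) (cross a b).
Proof.
  intros Ha Hb Hn. set (n := cross a b) in *.
  assert (Ix : vx nu * dot n n - vx n * dot n nu = dot nu b * vx (cross n a) - dot nu a * vx (cross n b))
    by (unfold n; vunf; ring).
  assert (Iy : vy nu * dot n n - vy n * dot n nu = dot nu b * vy (cross n a) - dot nu a * vy (cross n b))
    by (unfold n; vunf; ring).
  assert (Iz : vz nu * dot n n - vz n * dot n nu = dot nu b * vz (cross n a) - dot nu a * vz (cross n b))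
    by (unfold n; vunf; ring).
  rewrite Ha, Hb in Ix, Iy, Iz. clearbody n.
  assert (E : dot n nu = dot nu n) by (unfold dot; ring). rewrite E in *.
  apply v3_ext; unfold vscal, v3, vx, vy, vz; simpl; apply solve_aux; auto; unfold vx, vy, vz in *. all: lra.
Qed.

Lemma normN (y1 y2 y3 p W : R3) (d : R) : dot W W = 1 ->
  dot (vsub y1 p) W = - d -> dot (vsub y2 p) W = - d -> dot (vsub y3 p) W = - d -> 0 < d ->
  d * vnorm (cross (vsub y2 y1) (vsub y3 y1)) = Rabs (det3 (vsub y1 p) (vsub y2 p) (vsub y3 p)).
Proof.
  intros HW H1 H2 H3 Hd.
  assert (Hu : dot (vsub y2 y1) W = 0).
  { replace (dot (vsub y2 y1) W) with (dot (vsub y2 p) W - dot (vsub y1 p) W) by (vunf; ring). lra. }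
  assert (Hv : dot (vsub y3 y1) W = 0).
  { replace (dot (vsub y3 y1) W) with (dot (vsub y3 p) W - dot (vsub y1 p) W) by (vunf; ring). lra. }
  set (u := vsub y2 y1) in *. set (v := vsub y3 y1) in *.
  assert (ED : det3 (vsub y1 p) (vsub y2 p) (vsub y3 p) = dot (cross u v) (vsub y1 p)) by (unfold u, v; vunf; ring).
  set (N := cross u v) in *.
  assert (Ix : vx N * dot W W - vx W * dot W N = dot u W * vx (cross W v) - dot v W * vx (cross W u))
    by (unfold N; vunf; ring).
  assert (Iy : vy N * dot W W - vy W * dot W N = dot u W * vy (cross W v) - dot v W * vy (cross W u))
    by (unfold N; vunf; ring).
  assert (Iz : vz N * dot W W - vz W * dot W N = dot u W * vz (cross W v) - dot v W * vz (cross W u))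
    by (unfold N; vunf; ring).
  rewrite Hu, Hv, HW in *. clearbody N. set (k := dot W N) in *. clearbody k.
  assert (Nx : vx N = k * vx W) by lra. assert (Ny : vy N = k * vy W) by lra. assert (Nz : vz N = k * vz W) by lra.
  assert (EN : dot N N = k * k) by (unfold dot; rewrite Nx, Ny, Nz; unfold dot in HW; nra).
  assert (ED2 : dot N (vsub y1 p) = k * dot (vsub y1 p) W) by (unfold dot; rewrite Nx, Ny, Nz; ring).
  rewrite ED, ED2, H1. unfold vnorm. rewrite EN. change (k * k) with (Rsqr k). rewrite sqrt_Rsqr_abs.
  rewrite Rabs_mult, Rabs_Ropp, (Rabs_pos_eq d) by lra. ring.
Qed.

Lemma sgn_lemma (m D X : R) : m * D < 0 -> m * m * X = 1 -> 0 <= X ->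
  m * sqrt X = (if Rlt_dec 0 D then -1 else 1).
Proof.
  intros H1 H2 H3. pose proof (sqrt_sqrt X H3) as E. pose proof (sqrt_pos X) as P.
  assert (Q : (m * sqrt X) * (m * sqrt X) = 1) by (transitivity (m*m*(sqrt X * sqrt X)); [ring | rewrite E; exact H2]).
  destruct (Rlt_dec 0 D) as [HD|HD].
  - assert (m < 0) by nra. assert (m * sqrt X <= 0) by nra. nra.
  - assert (D < 0) by (destruct (Rtotal_order D 0) as [h|[h|h]]; [lra | subst; lra | lra]).
    assert (0 < m) by nra. assert (0 <= m * sqrt X) by nra. nra.
Qed.

Lemma crossA (e1 e2 e3 : R3) m1 m3 :
  cross (vscal m1 (cross e1 e2)) (vscal m3 (cross e3 e1)) = vscal (-(m1*m3*det3 e1 e2 e3)) e1.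
Proof. apply v3_ext; vunf; ring. Qed.
Lemma crossB (e1 e2 e3 : R3) m1 m2 :
  cross (vscal m2 (cross e2 e3)) (vscal m1 (cross e1 e2)) = vscal (-(m1*m2*det3 e1 e2 e3)) e2.
Proof. apply v3_ext; vunf; ring. Qed.
Lemma crossC (e1 e2 e3 : R3) m2 m3 :
  cross (vscal m3 (cross e3 e1)) (vscal m2 (cross e2 e3)) = vscal (-(m2*m3*det3 e1 e2 e3)) e3.
Proof. apply v3_ext; vunf; ring. Qed.

Lemma vnorm_cross_scal (a b : R3) k1 k2 : 0 <= k1 * k2 ->
  vnorm (cross (vscal k1 a) (vscal k2 b)) = k1 * k2 * vnorm (cross a b).
Proof.
  intros H. unfold vnorm.
  replace (dot (cross (vscal k1 a) (vscal k2 b)) (cross (vscal k1 a) (vscal k2 b)))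
    with ((k1*k2) * (k1*k2) * dot (cross a b) (cross a b)) by (vunf; ring).
  rewrite sqrt_mult. 2: nra. 2: apply dot_ge0.
  rewrite sqrt_square by exact H. ring.
Qed.

Lemma rcdot_scal (k : R) (e : R3) (th : C3) : rcdot (vscal k e) th = (RtoC k * rcdot e th)%C.
Proof. unfold rcdot, vscal, v3, vx, vy, vz; simpl. rewrite !RtoC_mult. ring. Qed.

Lemma sum_id_x (e1 e2 e3 : R3) (th : C3) :
  (RtoC (vx (cross e1 e2)) * rcdot e3 th + RtoC (vx (cross e2 e3)) * rcdot e1 th
   + RtoC (vx (cross e3 e1)) * rcdot e2 th)%C = (RtoC (det3 e1 e2 e3) * cvx th)%C.
Proof.
  destruct th as [[[a1 a2] [b1 b2]] [c1 c2]].
  unfold rcdot, cvx, cvy, cvz. vunf. apply injective_projections; simpl; ring.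
Qed.
Lemma sum_id_y (e1 e2 e3 : R3) (th : C3) :
  (RtoC (vy (cross e1 e2)) * rcdot e3 th + RtoC (vy (cross e2 e3)) * rcdot e1 th
   + RtoC (vy (cross e3 e1)) * rcdot e2 th)%C = (RtoC (det3 e1 e2 e3) * cvy th)%C.
Proof.
  destruct th as [[[a1 a2] [b1 b2]] [c1 c2]].
  unfold rcdot, cvx, cvy, cvz. vunf. apply injective_projections; simpl; ring.
Qed.
Lemma sum_id_z (e1 e2 e3 : R3) (th : C3) :
  (RtoC (vz (cross e1 e2)) * rcdot e3 th + RtoC (vz (cross e2 e3)) * rcdot e1 th
   + RtoC (vz (cross e3 e1)) * rcdot e2 th)%C = (RtoC (det3 e1 e2 e3) * cvz th)%C.
Proof.
  destruct th as [[[a1 a2] [b1 b2]] [c1 c2]].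
  unfold rcdot, cvx, cvy, cvz. vunf. apply injective_projections; simpl; ring.
Qed.

Lemma t_lemma (c w1 w2 wp1 wp2 d : R) (e : R3) : 0 < c ->
  dot e (omega_c c w1 w2) = - d ->
  rcdot e (theta c w1 w2 wp1 wp2) =
  (- RtoC c * (RtoC (d * sqrt (c ^ 2 + 1) / c) - Ci * RtoC (dot e (v3 wp1 wp2 0))))%C.
Proof.
  intros Hc H. assert (HS : 0 < sqrt (c ^ 2 + 1)) by (apply sqrt_lt_R0; nra).
  set (S := sqrt (c ^ 2 + 1)) in *. unfold omega_c in H. vunf.
  assert (H' : fst (fst e) * (c * w1) + snd (fst e) * (c * w2) - snd e = - d * S).
  { replace (sqrt (c * (c * 1) + 1)) with S in H by (unfold S; f_equal; ring).
    rewrite <- H. field. lra. }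
  unfold rcdot, theta, cv3, cvx, cvy, cvz, vx, vy, vz. 
  apply injective_projections; simpl.
  - field_simplify; [| lra]. replace (- c * d * S / c) with (- d * S) by (field; lra). lra.
  - ring.
Qed.

Lemma RtoC_nz (x : R) : x <> 0 -> RtoC x <> RtoC 0.
Proof. intros H E. apply H. apply (f_equal fst) in E. exact E. Qed.

Lemma comp_eq (z1 z2 z3 thc : C) (c d nN D s m1 m2 m3 v1 v2 v3 a1 a2 a3 : R) :
  z1 <> RtoC 0 -> z2 <> RtoC 0 -> z3 <> RtoC 0 -> c <> 0 -> d <> 0 ->
  m1 <> 0 -> m2 <> 0 -> m3 <> 0 -> D <> 0 ->
  m1 * v1 = s -> m2 * v2 = s -> m3 * v3 = s ->
  (RtoC a1 * (- RtoC c * z3) + RtoC a2 * (- RtoC c * z1) + RtoC a3 * (- RtoC c * z2))%C = (RtoC D * thc)%C ->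
  d * nN = - (s * D) ->
  (RtoC (2 * d) * (RtoC nN * / (2 * z1 * z2 * z3)) * thc)%C =
  (RtoC (c ^ 3) *
   (RtoC ((-(m1*m3*D)) * (-(m1*m2*D)) * v1) / ((RtoC (-(m1*m3*D)) * (- RtoC c * z1)) * (RtoC (-(m1*m2*D)) * (- RtoC c * z2))) * RtoC (m1 * a1)
  + (RtoC ((-(m1*m2*D)) * (-(m2*m3*D)) * v2) / ((RtoC (-(m1*m2*D)) * (- RtoC c * z2)) * (RtoC (-(m2*m3*D)) * (- RtoC c * z3))) * RtoC (m2 * a2)
  +  RtoC ((-(m2*m3*D)) * (-(m1*m3*D)) * v3) / ((RtoC (-(m2*m3*D)) * (- RtoC c * z3)) * (RtoC (-(m1*m3*D)) * (- RtoC c * z1))) * RtoC (m3 * a3))))%C.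
Proof.
  intros Hz1 Hz2 Hz3 Hc Hd Hm1 Hm2 Hm3 HD Hv1 Hv2 Hv3 Hsum HN.
  replace v1 with (s / m1) by (rewrite <- Hv1; field; auto).
  replace v2 with (s / m2) by (rewrite <- Hv2; field; auto).
  replace v3 with (s / m3) by (rewrite <- Hv3; field; auto).
  replace nN with (- (s * D) / d) by (rewrite <- HN; field; auto).
  transitivity (- RtoC s * (RtoC D * thc) / (z1 * z2 * z3))%C.
  - repeat first [rewrite RtoC_mult | rewrite RtoC_opp | rewrite RtoC_pow | rewrite RtoC_div by auto].
    pose proof (RtoC_nz _ Hd). field. repeat split; auto.
  - rewrite <- Hsum.
    repeat first [rewrite RtoC_mult | rewrite RtoC_opp | rewrite RtoC_pow | rewrite RtoC_div by auto].
    pose proof (RtoC_nz _ Hd). pose proof (RtoC_nz _ Hc). pose proof (RtoC_nz _ Hm1).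
    pose proof (RtoC_nz _ Hm2). pose proof (RtoC_nz _ Hm3). pose proof (RtoC_nz _ HD).
    field. repeat split; auto.
Qed.

Lemma c3_ext (u v : C3) : cvx u = cvx v -> cvy u = cvy v -> cvz u = cvz v -> u = v.
Proof. destruct u as [[u1 u2] u3], v as [[v1 v2] v3']; unfold cvx, cvy, cvz; simpl; intros; subst; auto. Qed.

Lemma cvx_cscal k z : cvx (cscal k z) = (k * cvx z)%C. Proof. reflexivity. Qed.
Lemma cvy_cscal k z : cvy (cscal k z) = (k * cvy z)%C. Proof. reflexivity. Qed.
Lemma cvz_cscal k z : cvz (cscal k z) = (k * cvz z)%C. Proof. reflexivity. Qed.
Lemma cvx_cvadd u v : cvx (cvadd u v) = (cvx u + cvx v)%C. Proof. reflexivity. Qed.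
Lemma cvy_cvadd u v : cvy (cvadd u v) = (cvy u + cvy v)%C. Proof. reflexivity. Qed.
Lemma cvz_cvadd u v : cvz (cvadd u v) = (cvz u + cvz v)%C. Proof. reflexivity. Qed.
Lemma cvx_st th a b c : cvx (sum_term th a b c) =
  (RtoC (vnorm (cross (cross b a) (cross c b))) / (rcdot (cross b a) th * rcdot (cross c b) th) * RtoC (vx b))%C.
Proof. reflexivity. Qed.
Lemma cvy_st th a b c : cvy (sum_term th a b c) =
  (RtoC (vnorm (cross (cross b a) (cross c b))) / (rcdot (cross b a) th * rcdot (cross c b) th) * RtoC (vy b))%C.
Proof. reflexivity. Qed.
Lemma cvz_st th a b c : cvz (sum_term th a b c) =
  (RtoC (vnorm (cross (cross b a) (cross c b))) / (rcdot (cross b a) th * rcdot (cross c b) th) * RtoC (vz b))%C.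
Proof. reflexivity. Qed.
Lemma vx_scal k a : vx (vscal k a) = k * vx a. Proof. reflexivity. Qed.
Lemma vy_scal k a : vy (vscal k a) = k * vy a. Proof. reflexivity. Qed.
Lemma vz_scal k a : vz (vscal k a) = k * vz a. Proof. reflexivity. Qed.
Lemma dot_scal_l k a b : dot (vscal k a) b = k * dot a b. Proof. unfold dot, vscal, v3, vx, vy, vz; simpl; ring. Qed.
Lemma dot_scal2 k a : dot (vscal k a) (vscal k a) = k * k * dot a a. Proof. unfold dot, vscal, v3, vx, vy, vz; simpl; ring. Qed.
Lemma dot_sub_l a b w : dot (vsub a b) w = dot a w - dot b w. Proof. unfold dot, vsub, v3, vx, vy, vz; simpl; ring. Qed.

Lemma normal_ex (nu a b opp p' : R3) :
  dot nu a = 0 -> dot nu b = 0 -> dot (cross a b) opp <> 0 ->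
  exists m, nu = vscal m (cross a b).
Proof.
  intros Ha Hb Ho. eexists. apply normal_par; auto. apply (dot_nz _ opp); auto.
Qed.

Theorem proposition4p2
  (c : R) (w1 w2 wp1 wp2 : R) (p y1 y2 y3 nu1 nu2 nu3 : R3) (delta : R)
  (hc : 0 < c)
  (hw : w1 ^ 2 + w2 ^ 2 = 1) (hwp : wp1 ^ 2 + wp2 ^ 2 = 1)
  (hperp : w1 * wp1 + w2 * wp2 = 0)
  (hdelta : 0 < delta)
  (hy1 : dot y1 (omega_c c w1 w2) = dot p (omega_c c w1 w2) - delta)
  (hy2 : dot y2 (omega_c c w1 w2) = dot p (omega_c c w1 w2) - delta)
  (hy3 : dot y3 (omega_c c w1 w2) = dot p (omega_c c w1 w2) - delta)
  (hindep : det3 (vsub y1 p) (vsub y2 p) (vsub y3 p) <> 0)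
  (hnu1 : outward_unit_normal p y1 y2 y3 nu1)
  (hnu2 : outward_unit_normal p y2 y3 y1 nu2)
  (hnu3 : outward_unit_normal p y3 y1 y2 nu3)
  (hlab1 : dot (cross nu1 nu3) (omega_c c w1 w2) < 0)
  (hlab2 : dot (cross nu2 nu1) (omega_c c w1 w2) < 0)
  (hlab3 : dot (cross nu3 nu2) (omega_c c w1 w2) < 0) :
  let KD : C :=
    (RtoC (2 * delta) *
     triangle_surface_integral
       (fun y => / (RtoC (delta * sqrt (c ^ 2 + 1) / c)
                    - Ci * RtoC (dot (vsub y p) (v3 wp1 wp2 0))) ^ 3)%C
       y1 y2 y3)%C in
  let th := theta c w1 w2 wp1 wp2 in
  cscal KD th =
  cscal (RtoC (c ^ 3))
    (cvadd (sum_term th nu3 nu1 nu2)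
       (cvadd (sum_term th nu1 nu2 nu3) (sum_term th nu2 nu3 nu1))).
Proof.
  intros KD th. subst KD th.
  clear hlab1 hlab2 hlab3.
  assert (HS : 0 < sqrt (c ^ 2 + 1)) by (apply sqrt_lt_R0; nra).
  set (K := delta * sqrt (c ^ 2 + 1) / c).
  assert (HK : K <> 0). { unfold K. apply Rgt_not_eq. apply Rdiv_lt_0_compat; nra. }
  unfold triangle_surface_integral.
  rewrite (tri_integral K (dot (vsub y1 p) (v3 wp1 wp2 0)) (dot (vsub y2 p) (v3 wp1 wp2 0))
             (dot (vsub y3 p) (v3 wp1 wp2 0))); auto.
  2:{ intros a b. f_equal. f_equal. f_equal. f_equal. f_equal.
      unfold tri_param. vunf. ring. }
  destruct hnu1 as [Hn1 [Ha1 [Hb1 Ho1]]].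
  destruct hnu2 as [Hn2 [Ha2 [Hb2 Ho2]]].
  destruct hnu3 as [Hn3 [Ha3 [Hb3 Ho3]]].
  assert (he1 : dot (vsub y1 p) (omega_c c w1 w2) = - delta) by (rewrite dot_sub_l; lra).
  assert (he2 : dot (vsub y2 p) (omega_c c w1 w2) = - delta) by (rewrite dot_sub_l; lra).
  assert (he3 : dot (vsub y3 p) (omega_c c w1 w2) = - delta) by (rewrite dot_sub_l; lra).
  assert (hOO : dot (omega_c c w1 w2) (omega_c c w1 w2) = 1).
  { unfold omega_c. rewrite dot_scal2.
    replace (dot (v3 (c * w1) (c * w2) (-1)) (v3 (c * w1) (c * w2) (-1))) with (c^2 * (w1^2+w2^2) + 1)
      by (unfold dot, v3, vx, vy, vz; simpl; ring).
    rewrite hw. rewrite <- Rinv_mult. rewrite sqrt_sqrt by nra. field. nra. }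
  pose proof (normN y1 y2 y3 p (omega_c c w1 w2) delta hOO he1 he2 he3 hdelta) as HNN.
  clear hy1 hy2 hy3.
  set (e1 := vsub y1 p) in *. set (e2 := vsub y2 p) in *. set (e3 := vsub y3 p) in *.
  set (D := det3 e1 e2 e3) in *.
  assert (D1 : dot (cross e1 e2) e3 = D) by (unfold D; vunf; ring).
  assert (D2 : dot (cross e2 e3) e1 = D) by (unfold D; vunf; ring).
  assert (D3 : dot (cross e3 e1) e2 = D) by (unfold D; vunf; ring).
  destruct (normal_ex nu1 e1 e2 e3 p Ha1 Hb1) as [m1 E1]. rewrite D1; auto.
  destruct (normal_ex nu2 e2 e3 e1 p Ha2 Hb2) as [m2 E2]. rewrite D2; auto.
  destruct (normal_ex nu3 e3 e1 e2 p Ha3 Hb3) as [m3 E3]. rewrite D3; auto.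
  subst nu1 nu2 nu3.
  rewrite dot_scal_l, D1 in Ho1. rewrite dot_scal_l, D2 in Ho2. rewrite dot_scal_l, D3 in Ho3.
  apply unit_dot in Hn1. apply unit_dot in Hn2. apply unit_dot in Hn3.
  rewrite dot_scal2 in Hn1, Hn2, Hn3.
  set (s := if Rlt_dec 0 D then -1 else 1).
  assert (S1 : m1 * vnorm (cross e1 e2) = s) by (apply sgn_lemma; auto; apply dot_ge0).
  assert (S2 : m2 * vnorm (cross e2 e3) = s) by (apply sgn_lemma; auto; apply dot_ge0).
  assert (S3 : m3 * vnorm (cross e3 e1) = s) by (apply sgn_lemma; auto; apply dot_ge0).
  assert (HN' : delta * vnorm (cross (vsub y2 y1) (vsub y3 y1)) = - (s * D)).
  { rewrite HNN. unfold s. destruct (Rlt_dec 0 D).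
    - rewrite Rabs_pos_eq; lra.
    - rewrite Rabs_left; [lra|]. destruct (Rtotal_order D 0) as [h|[h|h]]; lra. }
  pose proof (t_lemma c w1 w2 wp1 wp2 delta e1 hc he1) as T1.
  pose proof (t_lemma c w1 w2 wp1 wp2 delta e2 hc he2) as T2.
  pose proof (t_lemma c w1 w2 wp1 wp2 delta e3 hc he3) as T3.
  fold K in T1, T2, T3.
  assert (Z1 : (K - Ci * dot e1 (v3 wp1 wp2 0))%C <> RtoC 0) by (apply fst_nz; simpl; lra).
  assert (Z2 : (K - Ci * dot e2 (v3 wp1 wp2 0))%C <> RtoC 0) by (apply fst_nz; simpl; lra).
  assert (Z3 : (K - Ci * dot e3 (v3 wp1 wp2 0))%C <> RtoC 0) by (apply fst_nz; simpl; lra).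
  assert (P23 : 0 < (m2 * D) * (m3 * D)) by nra.
  assert (P12 : 0 < (m1 * D) * (m2 * D)) by nra.
  assert (P13 : 0 < (m1 * D) * (m3 * D)) by nra.
  assert (hm1 : m1 <> 0) by (intro; subst; lra).
  assert (hm2 : m2 <> 0) by (intro; subst; lra).
  assert (hm3 : m3 <> 0) by (intro; subst; lra).
  assert (Q1 : 0 <= (-(m1*m3*det3 e1 e2 e3)) * (-(m1*m2*det3 e1 e2 e3))).
  { fold D. replace ((-(m1*m3*D)) * (-(m1*m2*D))) with (m1*m1*((m2*D)*(m3*D))) by ring.
    apply Rmult_le_pos; [nra | lra]. }
  assert (Q2 : 0 <= (-(m1*m2*det3 e1 e2 e3)) * (-(m2*m3*det3 e1 e2 e3))).
  { fold D. replace ((-(m1*m2*D)) * (-(m2*m3*D))) with (m2*m2*((m1*D)*(m3*D))) by ring.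
    apply Rmult_le_pos; [nra | lra]. }
  assert (Q3 : 0 <= (-(m2*m3*det3 e1 e2 e3)) * (-(m1*m3*det3 e1 e2 e3))).
  { fold D. replace ((-(m2*m3*D)) * (-(m1*m3*D))) with (m3*m3*((m1*D)*(m2*D))) by ring.
    apply Rmult_le_pos; [nra | lra]. }
  apply c3_ext.
  - rewrite cvx_cscal, cvx_cscal, !cvx_cvadd, !cvx_st.
    rewrite crossA, crossB, crossC.
    rewrite (vnorm_cross_scal e1 e2) by exact Q1.
    rewrite (vnorm_cross_scal e2 e3) by exact Q2.
    rewrite (vnorm_cross_scal e3 e1) by exact Q3.
    rewrite !rcdot_scal, T1, T2, T3, !vx_scal.
    apply comp_eq with (s := s); auto; try lra.
    rewrite <- T1, <- T2, <- T3. apply sum_id_x.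
  - rewrite cvy_cscal, cvy_cscal, !cvy_cvadd, !cvy_st.
    rewrite crossA, crossB, crossC.
    rewrite (vnorm_cross_scal e1 e2) by exact Q1.
    rewrite (vnorm_cross_scal e2 e3) by exact Q2.
    rewrite (vnorm_cross_scal e3 e1) by exact Q3.
    rewrite !rcdot_scal, T1, T2, T3, !vy_scal.
    apply comp_eq with (s := s); auto; try lra.
    rewrite <- T1, <- T2, <- T3. apply sum_id_y.
  - rewrite cvz_cscal, cvz_cscal, !cvz_cvadd, !cvz_st.
    rewrite crossA, crossB, crossC.
    rewrite (vnorm_cross_scal e1 e2) by exact Q1.
    rewrite (vnorm_cross_scal e2 e3) by exact Q2.
    rewrite (vnorm_cross_scal e3 e1) by exact Q3.
    rewrite !rcdot_scal, T1, T2, T3, !vz_scal.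
    apply comp_eq with (s := s); auto; try lra.
    rewrite <- T1, <- T2, <- T3. apply sum_id_z.
Qed.
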